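(* Let $C\subseteq\mathbb{R}^n$ be a nonempty compact convex set and let $f:\mathbb{R}^n\to\mathbb{R}$ be an abs-smooth function such that, for every $x\in C$, its piecewise linearization $f_{PL,x}$ is convex on $C$. Let $\mathcal{C}_f$ be the curvature constant of $f$ on $C$ and let $x^*$ be a minimizer of $f$ on $C$. Let $x\in C$, $\alpha\in(0,1]$ and $\epsilon\ge0$ be arbitrary, and let $v\in C$ satisfy $$\Delta f(x;\alpha(v-x)) \le \min_{w\in C}\Delta f(x;\alpha(w-x)) + \tfrac12\epsilon\alpha^2\,\mathcal{C}_f .$$ Then $$f(x)-f(x^* ) \le \frac{-\Delta f(x;\alpha(v-x))}{\alpha} + \frac12\big(1+\alpha\epsilon\big)\mathcal{C}_f .$$
   Context: A function $f:\mathbb{R}^n\to\mathbb{R}$ is abs-smooth if it is locally Lipschitz and admits an abs-smooth form: for some $s\in\mathbb{N}\cup\{0\}$ there are $F=(F_1,\dots,F_s)\in\mathcal{C}^d(\mathbb{R}^{n+s+s},\mathbb{R}^s)$ and $\varphi\in\mathcal{C}^d(\mathbb{R}^{n+s},\mathbb{R})$ with $d\ge1$ such that $y=f(x)$ is computed by $z_i=F_i(x,z_1,\dots,z_{i-1},|z_1|,\dots,|z_{i-1}|)$ for $i=1,\dots,s$ and $y=\varphi(x,z)$. For a point $\mathring{x}$, write $\mathring z=z(\mathring x)$ and let $Z=\partial_x F$, $M=\partial_z F$, $L=\partial_{|z|}F$ (evaluated at $(\mathring x,\mathring z,|\mathring z|)$; $M,L$ strictly lower triangular), $a=\partial_x\varphi$,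 $b=\partial_z\varphi$ (evaluated at $(\mathring x,\mathring z)$). The piecewise linearization of $f$ at $\mathring x$ is $f_{PL,\mathring x}(x)=d_0+a^Tx+b^Tz$ where $z$ solves $z=c+Zx+Mz+L|z|$ (uniquely, recursively), with constants $c,d_0$ chosen so that $f_{PL,\mathring x}(\mathring x)=f(\mathring x)$ (namely $c=\mathring z-Z\mathring x-M\mathring z-L|\mathring z|$, $d_0=f(\mathring x)-a^T\mathring x-b^T\mathring z$). The abs-linearization is $\Delta f(\mathring x;x-\mathring x):=f_{PL,\mathring x}(x)-f(\mathring x)$. ''$f_{PL,x}$ convex on $C$'' means $f_{PL,x}(\lambda y+(1-\lambda)w)\le\lambda f_{PL,x}(y)+(1-\lambda)f_{PL,x}(w)$ for all $y,w\in C$, $\lambda\in[0,1]$. The curvature constant of $f$ on $C$ is $$\mathcal{C}_f:=\sup_{x,v\in C,\ \alpha\in(0,1],\ y=x+\alpha(v-x)}\frac{2}{\alpha^2}\big|f(y)-f(x)-\Delta f(x;y-x)\big|,$$ which is finite for compact $C$. *)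

(* Defs.v *)
From HB Require Import structures.
From mathcomp Require Import all_boot all_order all_algebra.
From mathcomp Require Import all_classical all_reals all_analysis.
Set Implicit Arguments.
Unset Strict Implicit.
Unset Printing Implicit Defensive.
Import Order.TTheory GRing.Theory Num.Theory.
Import numFieldNormedType.Exports.
Local Open Scope classical_set_scope.
Local Open Scope ring_scope.

Section AbsSmooth.
Variable R : realType.

Definition vabs (s : nat) (z : 'rV[R]_s) : 'rV[R]_s := map_mx (fun t => `|t|) z.

Definition xzw (n s : nat) (x : 'rV[R]_n) (z w : 'rV[R]_s) : 'rV[R]_(n + s + s) :=
  row_mx (row_mx x z) w.

(* C^1 on the whole space: differentiable everywhere and every directional
   derivative p |-> 'd G p v is continuous (in finite dimension this is
   continuity of p |-> 'd G p) *)
Definition C1 (V W : normedModType R) (G : V -> W) : Prop :=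
  (forall p, differentiable G p) /\ (forall v : V, continuous (fun p => 'd G p v)).

Definition lower_triangular_dep (n s : nat) (F : 'rV[R]_(n + s + s) -> 'rV[R]_s) : Prop :=
  forall (i : 'I_s) (x : 'rV[R]_n) (z w z' w' : 'rV[R]_s),
    (forall j : 'I_s, (j < i)%N -> z ord0 j = z' ord0 j /\ w ord0 j = w' ord0 j) ->
    F (xzw x z w) ord0 i = F (xzw x z' w') ord0 i.

(* (F, phi) is an abs-smooth form (with d = 1, which covers every d >= 1) *)
Definition abs_smooth_form (n s : nat) (F : 'rV[R]_(n + s + s) -> 'rV[R]_s)
    (phi : 'rV[R]_(n + s) -> R) : Prop :=
  [/\ C1 F, C1 phi & lower_triangular_dep F].

(* switching vector z(x): the recursion z_i = F_i(x, z_<i, |z_<i|), i = 1..s;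
   computed by s sweeps of z |-> F(x, z, |z|) (exact by lower triangularity) *)
Definition switching (n s : nat) (F : 'rV[R]_(n + s + s) -> 'rV[R]_s)
    (x : 'rV[R]_n) : 'rV[R]_s :=
  iter s (fun z => F (xzw x z (vabs z))) 0.

Definition represents (n s : nat) (f : 'rV[R]_n -> R)
    (F : 'rV[R]_(n + s + s) -> 'rV[R]_s) (phi : 'rV[R]_(n + s) -> R) : Prop :=
  forall x, f x = phi (row_mx x (switching F x)).

Definition locally_lipschitz (n : nat) (f : 'rV[R]_n -> R) : Prop :=
  forall x : 'rV[R]_n, exists2 r : R, 0 < r & exists L : R,
    forall y z, ball x r y -> ball x r z -> `|f y - f z| <= L * `|y - z|.

Definition abs_smooth (n : nat) (f : 'rV[R]_n -> R) : Prop :=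
  locally_lipschitz f /\
  exists s (F : 'rV[R]_(n + s + s) -> 'rV[R]_s) (phi : 'rV[R]_(n + s) -> R),
    abs_smooth_form F phi /\ represents f F phi.

(* With DF := 'd F (xo, zo, |zo|) one has Z x + M z + L w = DF (x, z, w),
   and with Dphi := 'd phi (xo, zo) one has a^T x + b^T z = Dphi (x, z). *)
Section PL.
Variables (n s : nat) (F : 'rV[R]_(n + s + s) -> 'rV[R]_s)
  (phi : 'rV[R]_(n + s) -> R) (f : 'rV[R]_n -> R) (xo : 'rV[R]_n).

Definition zo : 'rV[R]_s := switching F xo.
Definition DF : 'rV[R]_(n + s + s) -> 'rV[R]_s := 'd F (xzw xo zo (vabs zo)).
Definition Dphi : 'rV[R]_(n + s) -> R := 'd phi (row_mx xo zo).
Definition c_PL : 'rV[R]_s := zo - DF (xzw xo zo (vabs zo)).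
Definition d0_PL : R := f xo - Dphi (row_mx xo zo).
(* z solving z = c + Z x + M z + L |z| (s sweeps; exact since M, L are
   strictly lower triangular) *)
Definition z_PL (x : 'rV[R]_n) : 'rV[R]_s :=
  iter s (fun z => c_PL + DF (xzw x z (vabs z))) 0.
Definition f_PL (x : 'rV[R]_n) : R := d0_PL + Dphi (row_mx x (z_PL x)).
Definition absLin (d : 'rV[R]_n) : R := f_PL (xo + d) - f xo.
End PL.

Definition PL_convex_on (n s : nat) (F : 'rV[R]_(n + s + s) -> 'rV[R]_s)
    (phi : 'rV[R]_(n + s) -> R) (f : 'rV[R]_n -> R) (x : 'rV[R]_n)
    (C : set 'rV[R]_n) : Prop :=
  forall y w (lam : R), C y -> C w -> 0 <= lam <= 1 ->
    f_PL F phi f x (lam *: y + (1 - lam) *: w)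
      <= lam * f_PL F phi f x y + (1 - lam) * f_PL F phi f x w.

Definition convex_setR (n : nat) (C : set 'rV[R]_n) : Prop :=
  forall y w (lam : R), C y -> C w -> 0 <= lam <= 1 -> C (lam *: y + (1 - lam) *: w).

Definition curvature (n s : nat) (F : 'rV[R]_(n + s + s) -> 'rV[R]_s)
    (phi : 'rV[R]_(n + s) -> R) (f : 'rV[R]_n -> R) (C : set 'rV[R]_n) : \bar R :=
  ereal_sup [set r : \bar R | exists x v (alpha : R),
     [/\ C x, C v, 0 < alpha <= 1 &
      let y := x + alpha *: (v - x) in
      r = ((2 / alpha ^+ 2) * `|f y - f x - absLin F phi f x (y - x)|)%:E]].
End AbsSmooth.

(* Main.v *)
Require Import Defs.
From HB Require Import structures.
From mathcomp Require Import all_boot all_order all_algebra.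
From mathcomp Require Import all_classical all_reals all_analysis.
From mathcomp Require Import ring lra.
Import Order.TTheory GRing.Theory Num.Theory.
Import numFieldNormedType.Exports.
Local Open Scope classical_set_scope.
Local Open Scope ring_scope.

Lemma o1 (R : realType) : (0 : R) < (1 : R) <= (1 : R).
Proof. by apply/andP; split; [exact: ltr01 | exact: lexx]. Qed.

Lemma small_zero (R : realType) (a0 c : R) :
  (forall a : R, 0 < a <= 1 -> (2 / a ^+ 2) * `|a0| <= c) -> a0 = 0.
Proof.
move=> H; apply/eqP; rewrite -normr_eq0; apply/negP => /negP na.
have t0 : 0 < `|a0| by rewrite normr_gt0 -normr_eq0.
have h1 := H 1 (o1 R); rewrite expr1n divr1 in h1.
have c0 : 0 < c by apply: lt_le_trans h1; rewrite mulr_gt0.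
have ha : 0 < `|a0| / c <= 1.
  apply/andP; split; first by rewrite divr_gt0.
  rewrite ler_pdivrMr // mul1r; apply: le_trans h1; rewrite ler_peMl //.
  by rewrite ler1n.
have h2 := H _ ha.
have e : 2 / (`|a0| / c) ^+ 2 * `|a0| = 2 * c ^+ 2 / `|a0|.
  by field; rewrite ?gt_eqF.
rewrite e ler_pdivrMr // in h2.
nra.
Qed.

Theorem mainTheorem2 (R : realType) (n s : nat)
    (f : 'rV[R]_n -> R)
    (F : 'rV[R]_(n + s + s) -> 'rV[R]_s) (phi : 'rV[R]_(n + s) -> R)
    (C : set 'rV[R]_n) (xstar x v : 'rV[R]_n) (alpha eps : R) :
  locally_lipschitz f ->
  abs_smooth_form F phi -> represents f F phi ->
  C !=set0 -> compact C -> convex_setR C ->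
  (forall y, C y -> PL_convex_on F phi f y C) ->
  C xstar -> (forall y, C y -> f xstar <= f y) ->
  C x -> 0 < alpha <= 1 -> 0 <= eps -> C v ->
  ((absLin F phi f x (alpha *: (v - x)))%:E
     <= ereal_inf [set (absLin F phi f x (alpha *: (w - x)))%:E | w in C]
        + (2^-1 * eps * alpha ^+ 2)%:E * curvature F phi f C)%E ->
  ((f x - f xstar)%:E
     <= (- absLin F phi f x (alpha *: (v - x)) / alpha)%:E
        + (2^-1 * (1 + alpha * eps))%:E * curvature F phi f C)%E.
Proof.
move=> _ _ _ _ _ _ Hconv Cxs Hmin Cx /andP[a0 a1] e0 Cv H.
set cur := curvature F phi f C in H *.
have ub : forall x0 v0 (a : R), C x0 -> C v0 -> 0 < a <= 1 ->
   (((2 / a ^+ 2) * `|f (x0 + a *: (v0 - x0)) - f x0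
       - absLin F phi f x0 (x0 + a *: (v0 - x0) - x0)|)%:E <= cur)%E.
  move=> x0 v0 a Cx0 Cv0 ha; apply: ereal_sup_ubound.
  by exists x0, v0, a; split.
have e1 : x + 1 *: (xstar - x) = xstar by rewrite scale1r addrCA subrr addr0.
have U1 := ub x xstar 1 Cx Cxs (o1 R).
rewrite e1 expr1n divr1 in U1.
have e2 : x + (xstar - x) = xstar by rewrite addrCA subrr addr0.
case Ec: cur U1 H => [c| |] U1 H.
- rewrite lee_fin in U1.
  have D0 : absLin F phi f x 0 = 0.
    apply: (@small_zero R _ c) => a ha.
    have := ub x x a Cx Cx ha.
    by rewrite Ec lee_fin ?(subrr, scaler0, addr0, sub0r) normrN.
  have fPLx : f_PL F phi f x x = f x.
    by move: D0; rewrite /absLin addr0 => /eqP; rewrite subr_eq0 => /eqP.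
  have hinf : (ereal_inf [set (absLin F phi f x (alpha *: (w - x)))%:E | w in C]
      <= (absLin F phi f x (alpha *: (xstar - x)))%:E)%E.
    by apply: ereal_inf_lbound; exists xstar.
  have h1 : absLin F phi f x (alpha *: (v - x)) <=
      absLin F phi f x (alpha *: (xstar - x)) + 2^-1 * eps * alpha ^+ 2 * c.
    rewrite -lee_fin; apply: (le_trans H); rewrite EFinD EFinM; exact: leeD2r.
  have h2 : absLin F phi f x (alpha *: (xstar - x)) <=
      alpha * (f_PL F phi f x xstar - f x).
    have hc := Hconv x Cx xstar x alpha Cxs Cx (introT andP (conj (ltW a0) a1)).
    rewrite fPLx in hc.
    rewrite /absLin.
    have -> : x + alpha *: (xstar - x) = alpha *: xstar + (1 - alpha) *: x.
      by rewrite scalerBr scalerBl scale1r addrCA.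
    nra.
  have h3 : f_PL F phi f x xstar - f x <= f xstar - f x + c / 2.
    move: U1; rewrite /absLin e2 => U1.
    have := ler_norm (- (f xstar - f x - (f_PL F phi f x xstar - f x))).
    rewrite normrN; nra.
  rewrite -EFinM -EFinD lee_fin.
  have h4 : alpha * (f_PL F phi f x xstar - f x) <=
      alpha * (f xstar - f x + c / 2) by rewrite ler_wpM2l // ltW.
  rewrite -subr_ge0.
  have -> : - absLin F phi f x (alpha *: (v - x)) / alpha +
      2^-1 * (1 + alpha * eps) * c - (f x - f xstar) =
      (- absLin F phi f x (alpha *: (v - x)) + alpha * c / 2 +
       2^-1 * eps * alpha ^+ 2 * c - alpha * (f x - f xstar)) / alpha.
    by field; rewrite gt_eqF.
  apply: divr_ge0; last exact: ltW.
  nra.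
- rewrite gt0_muley ?lte_fin; last first.
    by rewrite mulr_gt0 // ?invr_gt0 // ltr_pwDl // mulr_ge0 // ltW.
  by rewrite addey // leey.
- by move: U1; rewrite leeNy_eq.
Qed.
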